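(* Let $\tau>0$ and let $u_\tau$ be a continuous periodic solution of the discrete Lax--Oleinik equation with constant $\bar L(\tau)$. For every $(x,v)\in\widetilde{\mathcal A}^{\tau}_L$ there exists a bi-infinite sequence $\{x_k\}_{k\in\mathbb{Z}}$ such that $x_0=x$, $x_1=x+\tau v$, and for all integers $m<n$, \[ u_\tau(x_n)-u_\tau(x_m)=\sum_{j=m}^{n-1}\mathcal L_\tau(x_j,x_{j+1})-(n-m)\tau\bar L(\tau). \]
   Context: $\mathbb{T}^d=\mathbb{R}^d/\mathbb{Z}^d$; functions on $\mathbb{T}^d$ are identified with $\mathbb{Z}^d$-periodic functions on $\mathbb{R}^d$. $H$ is a Tonelli Hamiltonian on $\mathbb{T}^d\times\mathbb{R}^d$ ($C^2$, $D^2_{pp}H>0$, superlinear in $p$ uniformly in $x$) and $L(x,v)=\sup_p\{p\cdot v-H(x,p)\}$ its Legendre transform. For $\tau>0$, $\mathcal L_\tau(x,y):=\tau L(x,\frac{y-x}{\tau})$. The discrete Lax--Oleinik equation is $u_\tau(y)+\bar L(\tau)\tau=\inf_{x\in\mathbb{R}^d}(u_\tau(x)+\mathcal L_\tau(x,y))$ for all $y$; it is known that there is a unique constant $\bar L(\tau)$ for which a continuous periodic solution $u_\tau$ exists, and such solutions are Lipschitz. A calibrated configuration for $u_\tau(x)$ is a sequence $\{x_{-k}\}_{k\ge0}$ with $x_0=x$ and $u_\tau(x_{-k})+\tau\bar L(\tau)=u_\tau(x_{-k-1})+\mathcal L_\tau(x_{-k-1},x_{-k})$ for all $k\ge0$.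 Define $\widetilde\Sigma^\tau_L:=\{(x,v)\in\mathbb{T}^d\times\mathbb{R}^d:$ there is a calibrated configuration $\{x_{-k}\}_{k\ge0}$ for $u_\tau(x+\tau v)$ with $x_{-1}=x$, $(x_0-x_{-1})/\tau=v\}$. For $n\in\mathbb{N}$ and $(x,v)$, let $\Psi^n_{L,\tau}(x,v)$ be the set of points $\bigl(x_{-n-1},\frac{x_{-n}-x_{-n-1}}{\tau}\bigr)$ over all calibrated configurations $\{x_{-k}\}_{k\ge0}$ for $u_\tau(x+\tau v)$ with $x_{-1}=x$ and $v=(x_0-x_{-1})/\tau$; for a set $S$, $\Psi^n_{L,\tau}(S)$ is the union of $\Psi^n_{L,\tau}(z)$ over $z\in S$. The discrete Aubry set is $\widetilde{\mathcal A}^\tau_L:=\bigcap_{n\in\mathbb{N}}\Psi^n_{L,\tau}(\widetilde\Sigma^\tau_L)$. *)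

(* Defs.v *)
From HB Require Import structures.
From mathcomp Require Import all_boot all_order all_algebra.
From mathcomp Require Import all_classical all_reals all_analysis.
Set Implicit Arguments. Unset Strict Implicit. Unset Printing Implicit Defensive.
Import Order.TTheory GRing.Theory Num.Theory.
Import numFieldNormedType.Exports.
Local Open Scope classical_set_scope.
Local Open Scope ring_scope.

Section Defs.
Variables (R : realType) (d : nat).
Notation vec := 'rV[R]_d.

Definition dotv (p v : vec) : R := \sum_(i < d) p 0 i * v 0 i.

Definition zvec (k : 'rV[int]_d) : vec := map_mx (fun z : int => z%:~R) k.

Definition zperiodic (f : vec -> R) := forall x k, f (x + zvec k) = f x.

Definition Hjoint (H : vec -> vec -> R) (z : vec * vec) : R := H z.1 z.2.

(* C^2 on R^d x R^d: all directional derivatives of order 1 and 2 exist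
   everywhere and are continuous (equivalent to C^2). *)
Definition C2 (F : vec * vec -> R) :=
  continuous F /\
  (forall e z, derivable F z e) /\
  (forall e, continuous (fun z => 'D_e F z)) /\
  (forall e1 e2 z, derivable (fun y => 'D_e1 F y) z e2) /\
  (forall e1 e2, continuous (fun z => 'D_e2 (fun y => 'D_e1 F y) z)).

(* Tonelli Hamiltonian on T^d x R^d (lifted to a Z^d-periodic in x function
   on R^d x R^d). *)
Definition Tonelli (H : vec -> vec -> R) :=
  (forall x p k, H (x + zvec k) p = H x p) /\
  C2 (Hjoint H) /\
  (* D^2_pp H > 0 : the quadratic form w |-> w^T D^2_pp H(x,p) w is
     positive definite *)
  (forall x p (w : vec), w != 0 ->
     0 < 'D_((0 : vec), w) (fun y => 'D_((0 : vec), w) (Hjoint H) y) (x, p)) /\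
  (forall K : R, exists C : R, forall x p, K * `|p| - C <= H x p).

Definition Lag (H : vec -> vec -> R) (x v : vec) : R :=
  sup (range (fun p : vec => dotv p v - H x p)).

Definition Ltau (H : vec -> vec -> R) (tau : R) (x y : vec) : R :=
  tau * Lag H x (tau^-1 *: (y - x)).

Definition is_infimum (S : set R) (r : R) :=
  (forall s, S s -> r <= s) /\ (forall eps, 0 < eps -> exists2 s, S s & s < r + eps).

Definition discrete_LO_solution (H : vec -> vec -> R) (tau Lbar : R) (u : vec -> R) :=
  forall y, is_infimum (range (fun x => u x + Ltau H tau x y)) (u y + Lbar * tau).

(* xs k stands for x_{-k}; calibrated configuration for u(x) *)
Definition calibrated (H : vec -> vec -> R) (tau Lbar : R) (u : vec -> R)
  (x : vec) (xs : nat -> vec) :=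
  xs 0%N = x /\
  forall k : nat, u (xs k) + tau * Lbar = u (xs k.+1) + Ltau H tau (xs k.+1) (xs k).

Definition Sigma (H : vec -> vec -> R) (tau Lbar : R) (u : vec -> R) : set (vec * vec) :=
  [set z | exists xs, calibrated H tau Lbar u (z.1 + tau *: z.2) xs /\ xs 1%N = z.1].

Definition Psi (H : vec -> vec -> R) (tau Lbar : R) (u : vec -> R) (n : nat)
  (z : vec * vec) : set (vec * vec) :=
  [set w | exists xs, [/\ calibrated H tau Lbar u (z.1 + tau *: z.2) xs,
       xs 1%N = z.1, tau^-1 *: (xs 0%N - xs 1%N) = z.2 &
       w = (xs n.+1, tau^-1 *: (xs n - xs n.+1))]].

Definition Aubry (H : vec -> vec -> R) (tau Lbar : R) (u : vec -> R) : set (vec * vec) :=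
  [set w | forall n : nat, exists2 z, Sigma H tau Lbar u z & Psi H tau Lbar u n z w].

End Defs.

(* Main.v *)
Require Import Defs.
From HB Require Import structures.
From mathcomp Require Import all_boot all_order all_algebra.
From mathcomp Require Import all_classical all_reals all_analysis.
From mathcomp Require Import lra zify.
Import Order.TTheory GRing.Theory Num.Theory.
Import numFieldNormedType.Exports.
Local Open Scope classical_set_scope.
Local Open Scope ring_scope.

Section P.
Variables (R : realType) (d : nat) (H : 'rV[R]_d -> 'rV[R]_d -> R)
  (tau Lbar : R) (u : 'rV[R]_d -> R).
Hypotheses (HT : Tonelli H) (tau0 : 0 < tau) (uc : continuous u)
  (up : zperiodic u) (LO : discrete_LO_solution H tau Lbar u).

Lemma coord_le_norm (w : 'rV[R]_d) i : `|w ord0 i| <= `|w|.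
Proof.
by rewrite [leRHS]/Num.norm /= mx_normrE; apply/bigmax_geP; right; exists (ord0, i).
Qed.

Lemma dot_bound (p w : 'rV[R]_d) : dotv p w <= `|p| * \sum_i `|w ord0 i|.
Proof.
rewrite /dotv mulr_sumr; apply: ler_sum => i _.
apply: le_trans (ler_norm _) _; rewrite normrM; apply: ler_wpM2r => //.
exact: coord_le_norm.
Qed.

Lemma Lag_ub a w : has_ubound (range (fun p => dotv p w - H a p)).
Proof.
case: HT => _ [_ [_ Hsup]].
have [C HC] := Hsup (\sum_i `|w ord0 i|).
exists C => _ [p _ <-]; have := HC a p; have := dot_bound p w.
rewrite mulrC; lra.
Qed.

Lemma Lag_ge a w p : dotv p w - H a p <= Lag H a w.
Proof. by apply: (ub_le_sup (Lag_ub a w)); exists p. Qed.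

Lemma Lag_le a w M : (forall p, dotv p w - H a p <= M) -> Lag H a w <= M.
Proof.
move=> HM; apply: ge_sup; first by exists (dotv 0 w - H a 0), 0.
by move=> _ [p _ <-].
Qed.

Definition fl (a : 'rV[R]_d) : 'rV[int]_d := map_mx (fun r => Num.floor r) a.
Definition frac (a : 'rV[R]_d) := a - zvec R (fl a).

Lemma fracE a : a = frac a + zvec R (fl a).
Proof. by rewrite /frac subrK. Qed.

Lemma frac_bd a i : 0 <= frac a ord0 i < 1.
Proof.
rewrite /frac /zvec /fl !mxE.
have := floor_le (a ord0 i); have := floorD1_gt (a ord0 i).
rewrite intrD; lra.
Qed.


Lemma u_frac a : u a = u (frac a).
Proof. by rewrite {1}(fracE a) up. Qed.

Lemma u_diff : exists Q, forall a b, u b - u a <= Q.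
Proof.
have HT' := HT; case: HT' => _ [_ [_ Hsup]].
have [C HC] := Hsup (d%:R / tau).
exists (tau * C - Lbar * tau) => a b.
rewrite (u_frac a) (u_frac b).
set a' := frac a; set b' := frac b.
have fa := frac_bd a; have fb := frac_bd b; rewrite -/a' -/b' in fa fb.
clearbody a' b'.
have [LO1 _] := LO b'.
have := LO1 _ (ex_intro2 _ _ a' I erefl).
suff : Ltau H tau a' b' <= tau * C by lra.
rewrite /Ltau ler_pM2l //; apply: Lag_le => p.
set w := tau^-1 *: (b' - a').
have Sw : \sum_i `|w ord0 i| <= d%:R / tau.
  have -> : d%:R / tau = \sum_(i < d) tau^-1.
    by rewrite sumr_const card_ord mulr_natl.
  apply: ler_sum => i _; rewrite /w mxE [X in _ * X]mxE.
  rewrite normrM ger0_norm ?invr_ge0 ?(ltW tau0) //.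
  rewrite -[X in _ <= X]mulr1 ler_pM2l ?invr_gt0 //.
  have /andP[? ?] := frac_bd a i; have /andP[? ?] := frac_bd b i.
  have /andP[h1 h2] := fa i; have /andP[h3 h4] := fb i.
  rewrite !mxE ler_norml; apply/andP; split; lra.
have := HC a' p; have := dot_bound p w.
have : `|p| * \sum_i `|w ord0 i| <= `|p| * (d%:R / tau) by apply: ler_wpM2l.
rewrite [_ * `|p|]mulrC; lra.
Qed.

Lemma H_bound : exists M : R, forall (a p : 'rV[R]_d), (forall j, `|p ord0 j| <= 1) -> H a p <= M.
Proof.
have HT' := HT; case: HT' => Hper [[Hc _] _].
pose cube := [set v : 'rV[R]_d | forall i, `[(0:R), 1]%classic (v ord0 i)].
pose P := [set v : 'rV[R]_d | forall i, `[(-1:R), 1]%classic (v ord0 i)].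
have := (@rV_compact R d (fun=> `[(0:R), 1]%classic) (fun=> @segment_compact R _ _)).
move=> cc.
have cP := (@rV_compact R d (fun=> `[(-1:R), 1]%classic) (fun=> @segment_compact R _ _)).
have cS := compact_setX cc cP.
have := continuous_compact _ cS.
have Hcw : {within ([set v : 'rV[R]_d | forall i, `[(0:R), 1]%classic (v ord0 i)] `*` [set v : 'rV[R]_d | forall i, `[(-1:R), 1]%classic (v ord0 i)]), continuous (Hjoint H)}.
  by apply: continuous_subspaceT.
move=> /(_ _ _ Hcw).
move=> /compact_bounded [M [_ HM]].
exists (M + 1) => a p Hp.
rewrite (fracE a) Hper.
have := HM (M + 1) ltac:(lra) (Hjoint H (frac a, p)).
have : ([set v : 'rV[R]_d | forall i, `[(0:R), 1]%classic (v ord0 i)] `*` [set v : 'rV[R]_d | forall i, `[(-1:R), 1]%classic (v ord0 i)]) (frac a, p).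
  split => i /=; rewrite in_itv /=.
    by have /andP[-> /ltW ->] := frac_bd a i.
  by have := Hp i; rewrite ler_norml.
move=> hS /(_ (ex_intro2 _ _ _ hS erefl)) /=.
rewrite /Hjoint /= => h; exact: le_trans (ler_norm _) h.
Qed.


Lemma step_bound : exists B : R, 0 <= B /\ forall a b : 'rV[R]_d,
  Ltau H tau a b <= u b - u a + tau * Lbar -> forall i, `|b ord0 i - a ord0 i| <= B.
Proof.
have [Q HQ] := u_diff; have [M HM] := H_bound.
exists (Num.max 0 (Q + tau * Lbar + tau * M)); split; first by rewrite le_max lexx.
move=> a b hab i.
rewrite le_max; apply/orP; right.
set w := tau^-1 *: (b - a).
pose p : 'rV[R]_d := \row_j (if j == i then Num.sg (w ord0 i) else 0).
have hp : forall j, `|p ord0 j| <= 1.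
  move=> j; rewrite mxE; case: (j == i); last by rewrite normr0.
  by rewrite normr_sg; case: (w ord0 i != 0).
have dp : dotv p w = `|w ord0 i|.
  rewrite /dotv (bigD1 i) //= big1 => [|j /negbTE ji]; last by rewrite mxE ji mul0r.
  by rewrite mxE eqxx addr0 normrEsg.
have hL := Lag_ge a w p; rewrite dp in hL.
have h1 := HM a p hp; have h2 := HQ a b.
have ew : b ord0 i - a ord0 i = tau * w ord0 i.
  by rewrite /w !mxE mulrA mulfV ?gt_eqF // mul1r.
rewrite ew normrM gtr0_norm //.
move: hab; rewrite /Ltau -/w => hab.
have : tau * (`|w ord0 i| - H a p) <= tau * Lag H a w by rewrite ler_pM2l.
have : tau * H a p <= tau * M by rewrite ler_pM2l.
rewrite mulrBr; lra.
Qed.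


Lemma cont_dot (p : 'rV[R]_d) : continuous (fun w : 'rV[R]_d => dotv p w).
Proof.
rewrite /dotv; apply: continuous_big; first exact: add_continuous.
move=> i _ w; apply: continuousM; first exact: cst_continuous.
exact: coord_continuous.
Qed.

Import ArrowAsProduct.

Lemma cluster_le (z : nat -> (nat -> 'rV[R]_d)) (X : nat -> 'rV[R]_d)
  (g : (nat -> 'rV[R]_d) -> R) :
  cluster (z @ \oo) X -> continuous g ->
  (\forall n \near \oo, g (z n) <= 0) -> g X <= 0.
Proof.
move=> cl gc ev; rewrite leNgt; apply/negP => gX.
have nb : nbhs (g X) [set r : R | 0 < r].
  by apply: open_nbhs_nbhs; split; [exact: open_gt | exact: gX].
have nbX := gc X _ nb.
have [f [/= h1 h2]] := cl [set f | g f <= 0] _ ev nbX.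
by move: h1; rewrite leNgt h2.
Qed.


Lemma proj_cont (k : nat) : continuous (fun f : nat -> 'rV[R]_d => f k).
Proof. exact: (@proj_continuous nat (fun=> 'rV[R]_d) k). Qed.

Lemma chains x v : Aubry H tau Lbar u (x, v) ->
  exists Y : nat -> nat -> 'rV[R]_d, forall n, [/\ Y n n.+1 = x, Y n n = x + tau *: v &
    forall k, u (Y n k) + tau * Lbar = u (Y n k.+1) + Ltau H tau (Y n k.+1) (Y n k)].
Proof.
move=> HA.
suff : forall n, exists ys : nat -> 'rV[R]_d, [/\ ys n.+1 = x, ys n = x + tau *: v &
    forall k, u (ys k) + tau * Lbar = u (ys k.+1) + Ltau H tau (ys k.+1) (ys k)].
  by move=> /choice [Y HY]; exists Y.
move=> n; have [zz _ [ys [[_ cal] _ _ e]]] := HA n.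
case: e => e1 e2; exists ys; split => //.
rewrite e2 e1 scalerA mulfV ?gt_eqF // scale1r.
by rewrite addrC subrK.
Qed.


Lemma fst_cont : continuous (@fst 'rV[R]_d 'rV[R]_d).
Proof. move=> [a b]; exact: cvg_fst. Qed.
Lemma snd_cont : continuous (@snd 'rV[R]_d 'rV[R]_d).
Proof. move=> [a b]; exact: cvg_snd. Qed.

Lemma cont_pair_comp (k : nat) (h : 'rV[R]_d * 'rV[R]_d -> R) : continuous h ->
  continuous (fun f : nat -> 'rV[R]_d => h (f k, f k.+1)).
Proof.
move=> hc f; apply: (continuous_comp _ (hc _)).
exact: (cvg_pair (proj_cont k f) (proj_cont k.+1 f)).
Qed.

Lemma G_cont (p : 'rV[R]_d) : continuous (fun ab : 'rV[R]_d * 'rV[R]_d =>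
  tau * (dotv p (tau^-1 *: (ab.2 - ab.1)) - H ab.1 p) - (u ab.2 - u ab.1 + tau * Lbar)).
Proof.
have [_ [[Hc _] _]] := HT.
move=> ab.
apply: (continuousB
  (f := fun ab : 'rV[R]_d * 'rV[R]_d => tau * (dotv p (tau^-1 *: (ab.2 - ab.1)) - H ab.1 p))
  (g := fun ab : 'rV[R]_d * 'rV[R]_d => u ab.2 - u ab.1 + tau * Lbar)); last first.
  apply: (continuousD (f := fun ab : 'rV[R]_d * 'rV[R]_d => u ab.2 - u ab.1)
     (g := fun=> tau * Lbar)); last exact: cst_continuous.
  apply: (continuousB (f := fun ab : 'rV[R]_d * 'rV[R]_d => u ab.2)
     (g := fun ab : 'rV[R]_d * 'rV[R]_d => u ab.1)).
    exact: (continuous_comp (snd_cont ab) (uc _)).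
  exact: (continuous_comp (fst_cont ab) (uc _)).
apply: (continuousM (s := fun=> tau)
  (t := fun ab : 'rV[R]_d * 'rV[R]_d => dotv p (tau^-1 *: (ab.2 - ab.1)) - H ab.1 p)).
  exact: cst_continuous.
apply: (continuousB
  (f := fun ab : 'rV[R]_d * 'rV[R]_d => dotv p (tau^-1 *: (ab.2 - ab.1)))
  (g := fun ab : 'rV[R]_d * 'rV[R]_d => H ab.1 p)).
  apply: (continuous_comp (f := fun ab : 'rV[R]_d * 'rV[R]_d => tau^-1 *: (ab.2 - ab.1)) _ (cont_dot p _)).
  apply: (continuousZ (s := fun=> tau^-1) (f := fun ab : 'rV[R]_d * 'rV[R]_d => ab.2 - ab.1)).
    exact: cst_continuous.
  apply: (continuousB (f := @snd 'rV[R]_d 'rV[R]_d) (g := @fst 'rV[R]_d 'rV[R]_d)).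
    exact: snd_cont.
  exact: fst_cont.
apply: (continuous_comp (f := fun ab : 'rV[R]_d * 'rV[R]_d => (ab.1, p)) _ (Hc _)).
exact: (cvg_pair (fst_cont ab) (cvg_cst p)).
Qed.


Lemma cont_dist (k : nat) (c : 'rV[R]_d) :
  continuous (fun f : nat -> 'rV[R]_d => `|f k - c|).
Proof.
move=> f; apply: (continuous_comp (f := fun f : nat -> 'rV[R]_d => f k) (g := fun w : 'rV[R]_d => `|w - c|) (proj_cont k f)).
apply: (continuous_comp (f := fun w : 'rV[R]_d => w - c) (g := Num.norm) _ (@norm_continuous R 'rV[R]_d _)).
apply: (continuousB (f := id) (g := fun=> c)); first exact: cvg_id.
exact: cst_continuous.
Qed.

Lemma forward_seq x v : Aubry H tau Lbar u (x, v) ->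
  exists X : nat -> 'rV[R]_d, [/\ X 0%N = x, X 1%N = x + tau *: v &
    forall k, u (X k.+1) + tau * Lbar = u (X k) + Ltau H tau (X k) (X k.+1)].
Proof.
move=> HA; have [Y HY] := chains _ _ HA.
have [B [B0 HB]] := step_bound.
pose z n k := if (k <= n.+1)%N then Y n (n.+1 - k)%N else x.
have z0 n : z n 0%N = x by rewrite /z /= subn0; case: (HY n).
have z1 n : z n 1%N = x + tau *: v by rewrite /z /= subn1 /=; case: (HY n).
have zs n k : (k <= n)%N ->
    u (z n k.+1) + tau * Lbar = u (z n k) + Ltau H tau (z n k) (z n k.+1).
  move=> kn; rewrite /z ltnS kn (leqW kn).
  rewrite (subSn kn) subSS.
  by case: (HY n) => _ _ ->.
have zb n k i : `|z n k ord0 i - x ord0 i| <= k%:R * B.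
  elim: k => [|k IH]; first by rewrite z0 subrr normr0 mul0r.
  case: (leqP k n) => kn.
    have := HB (z n k) (z n k.+1) _ i.
    have := zs n k kn => e.
    move=> /(_ ltac:(lra)) h.
    have := ler_normD (z n k.+1 ord0 i - z n k ord0 i) (z n k ord0 i - x ord0 i).
    rewrite addrA subrK [X in _ -> _ <= X * B]mulrSr mulrDl mul1r.
    lra.
  rewrite /z ifF; last by apply/negbTE; rewrite -ltnNge ltnS.
  by rewrite subrr normr0 mulr_ge0.
pose A k := [set w : 'rV[R]_d |
  forall i, `[x ord0 i - k%:R * B, x ord0 i + k%:R * B]%classic (w ord0 i)].
have cA k : compact (A k).
  exact: (@rV_compact R d (fun i => `[x ord0 i - k%:R * B, x ord0 i + k%:R * B]%classic)
     (fun=> @segment_compact R _ _)).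
have cT := @tychonoff nat (fun=> 'rV[R]_d) A cA.
have hF : (z @ \oo) [set f : nat -> 'rV[R]_d | forall i, A i (f i)].
  exists 0%N => // n _ k i /=; rewrite in_itv /= -ler_distl; exact: zb.
have [X [AX clX]] := cT (z @ \oo) _ hF.
have Xc k c : (forall n, z n k = c) -> X k = c.
  move=> zc; have := @cluster_le z X (fun f => `|f k - c|) clX (cont_dist k c).
  move=> /(_ _) h; apply/eqP; rewrite -subr_eq0 -normr_le0; apply: h.
  by exists 0%N => // n _ /=; rewrite zc subrr normr0.
exists X; split; [exact: Xc | exact: Xc|] => k.
apply/eqP; rewrite eq_le; apply/andP; split.
  rewrite mulrC; exact: ((LO (X k.+1)).1 _ (ex_intro2 _ _ (X k) I erefl)).
set RHS := u (X k.+1) - u (X k) + tau * Lbar.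
have hL : Lag H (X k) (tau^-1 *: (X k.+1 - X k)) <= tau^-1 * RHS.
  apply: Lag_le => p.
  have := @cluster_le z X _ clX (cont_pair_comp k _ (G_cont p)).
  move=> /(_ _) /= h.
  have {}h : tau * (dotv p (tau^-1 *: (X k.+1 - X k)) - H (X k) p) <= RHS.
    rewrite -subr_le0; apply: h.
    exists k => // n /= kn.
    have e := zs n k kn.
    have hl := Lag_ge (z n k) (tau^-1 *: (z n k.+1 - z n k)) p.
    have : tau * (dotv p (tau^-1 *: (z n k.+1 - z n k)) - H (z n k) p) <=
       tau * Lag H (z n k) (tau^-1 *: (z n k.+1 - z n k)) by rewrite ler_pM2l.
    move: e; rewrite /Ltau; lra.
  by rewrite -(ler_pM2l tau0) mulrA mulfV ?gt_eqF // mul1r.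
have : tau * Lag H (X k) (tau^-1 *: (X k.+1 - X k)) <= tau * (tau^-1 * RHS).
  by rewrite ler_pM2l.
rewrite mulrA mulfV ?gt_eqF // mul1r /Ltau /RHS; lra.
Qed.


Lemma bi_seq x v : Aubry H tau Lbar u (x, v) ->
  exists xs : int -> 'rV[R]_d, [/\ xs 0 = x, xs 1 = x + tau *: v &
    forall j : int, u (xs (j + 1)) - u (xs j) = Ltau H tau (xs j) (xs (j + 1)) - tau * Lbar].
Proof.
move=> HA; have [X [X0 X1 Xs]] := forward_seq _ _ HA.
have [Y HY] := chains _ _ HA; case: (HY 0%N) => Y1 Y0 Ys.
exists (fun j => match j with Posz k => X k | Negz k => Y 0%N k.+2 end); split => // j.
case: j => k.
  have -> : Posz k + 1 = Posz k.+1 by lia.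
  have := Xs k; lra.
case: k => [|k].
  have -> : Negz 0 + 1 = Posz 0 by lia.
  rewrite X0 -Y1; have := Ys 1%N; lra.
have -> : Negz k.+1 + 1 = Negz k by lia.
have := Ys k.+2; lra.
Qed.

End P.

Theorem proposition3p5 (R : realType) (d : nat) (H : 'rV[R]_d -> 'rV[R]_d -> R)
  (tau Lbar : R) (u : 'rV[R]_d -> R) :
  Tonelli H -> 0 < tau ->
  continuous u -> zperiodic u -> discrete_LO_solution H tau Lbar u ->
  forall x v, Aubry H tau Lbar u (x, v) ->
  exists xs : int -> 'rV[R]_d,
    [/\ xs 0 = x, xs 1 = x + tau *: v &
      forall m n : int, m < n ->
        u (xs n) - u (xs m) =
          \sum_(0 <= i < absz (n - m)) Ltau H tau (xs (m + i%:Z)) (xs (m + i%:Z + 1))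
          - (n - m)%:~R * tau * Lbar].
Proof.
move=> HT tau0 uc up LO x v HA.
have [xs [xs0 xs1 st]] := @bi_seq R d H tau Lbar u HT tau0 uc up LO x v HA.
exists xs; split => // m n mn.
have [N ->] : exists N : nat, n = m + N%:Z.
  by exists (absz (n - m)); rewrite abszE gtr0_norm ?subr_gt0 // [m + _]addrC subrK.
have -> : m + N%:Z - m = N%:Z by lia.
rewrite /=.
elim: N => [|N IH].
  by rewrite addr0 subrr big_geq // mul0r mul0r subr0.
rewrite big_nat_recr //=.
have -> : m + N.+1%:Z = m + N%:Z + 1 by lia.
have := st (m + N%:Z).
have -> : (N.+1%:Z)%:~R = (N%:Z)%:~R + 1 :> R by rewrite -!pmulrn mulrSr.
move: IH; rewrite /=; lra.
Qed.
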